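(* Let $P\in\mathbb{R}^{p\times m}$, $Y_d\in\mathbb{R}^p$, plant $Y_k=PU_k+N_k$, $E_k=Y_d-Y_k$, $\bar U_k=-\Delta U_k$, $D_k=-\Delta N_k$, so that the extended state $\bar X_k=\begin{bmatrix}E_k\\ D_k\end{bmatrix}\in\mathbb{R}^{2p}$ satisfies $\bar X_{k+1}=\bar A\bar X_k+\bar B\bar U_k+F^{\top}\Delta D_k$ and $E_k=\bar C\bar X_k$, where $\bar B=\begin{bmatrix}P\\0\end{bmatrix}$. Let $\bar L\in\mathbb{R}^{2p\times p}$, let $\hat{\bar X}_0\in\mathbb{R}^{2p}$ be arbitrary, and define the extended state observer (ESO) $\hat{\bar X}_{k+1}=\bar A\hat{\bar X}_k+\bar B\bar U_k+\bar L(E_k-\bar C\hat{\bar X}_k)$, $k\in\mathbb{Z}_+$, for an arbitrary input sequence $(\bar U_k)$. Then: (a) $\hat{\bar X}_{k+1}=(\bar A-\bar L\bar C)\hat{\bar X}_k+\bar B\bar U_k+\bar LE_k$ and the observation error $\tilde{\bar X}_k=\bar X_k-\hat{\bar X}_k$ satisfies $\tilde{\bar X}_{k+1}=(\bar A-\bar L\bar C)\tilde{\bar X}_k-F^{\top}\Delta^2N_k$ for all $k\in\mathbb{Z}_+$; (b) the observation error has the following two properties — (boundedness) there exist a class-$\mathcal{K}_\infty$ function $\chi_1$, a class-$\mathcal{KL}$ function $\zeta$ and a finite $\beta_0\ge0$ with $\|\tilde{\bar X}_k\|\le\chi_1(\beta_{\Delta^2N})+\zeta(\beta_0,k)$ for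 all $k$, and (superattractiveness) there is a class-$\mathcal{K}_\infty$ function $\chi_2$ with $\limsup_{k\to\infty}\|\tilde{\bar X}_k\|\le\chi_2(\beta^{ess}_{\Delta^2N})$ — for all bounded uncertainties and initial conditions if and only if $\rho(\bar A-\bar L\bar C)<1$; (c) there always exists a gain $\bar L\in\mathbb{R}^{2p\times p}$ with $\rho(\bar A-\bar L\bar C)<1$.
   Context: Notation: $\mathbb{Z}_+=\{0,1,2,\dots\}$. For a sequence $(f_k)$, $\Delta f_k=f_{k+1}-f_k$, $\Delta^2f_k=\Delta(\Delta f_k)$. $\|\cdot\|$ is a fixed vector norm, $\rho(\cdot)$ the spectral radius. $(N_k)\subset\mathbb{R}^p$ is an unknown bounded uncertainty sequence; $\beta_{\Delta^2N}=\sup_k\|\Delta^2N_k\|$, $\beta^{ess}_{\Delta^2N}=\limsup_{k\to\infty}\|\Delta^2N_k\|$. Matrices: $\bar A=\begin{bmatrix}I_p&I_p\\0&I_p\end{bmatrix}$, $\bar C=\begin{bmatrix}I_p&0\end{bmatrix}$, $F=\begin{bmatrix}0&I_p\end{bmatrix}$. *)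

(* Defs.v *)
From HB Require Import structures.
From mathcomp Require Import all_boot all_order all_algebra.
From mathcomp Require Import all_classical all_reals all_analysis.
From mathcomp Require Import complex.
Set Implicit Arguments. Unset Strict Implicit. Unset Printing Implicit Defensive.
Import Order.TTheory GRing.Theory Num.Theory.
Import numFieldNormedType.Exports.
Local Open Scope classical_set_scope.
Local Open Scope ring_scope.

Section ESO.
Variable R : realType.

Definition is_vnorm (n : nat) (nu : 'cV[R]_n -> R) : Prop :=
  [/\ forall x, 0 <= nu x,
      forall x, nu x = 0 -> x = 0,
      forall (a : R) x, nu (a *: x) = `|a| * nu x
    & forall x y, nu (x + y) <= nu x + nu y].

Definition classK (a : R -> R) : Prop :=
  [/\ {within [set x : R | 0 <= x], continuous a},
      a 0 = 0
    & forall x y : R, 0 <= x -> x < y -> a x < a y].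

Definition classKinf (a : R -> R) : Prop :=
  classK a /\ (a x @[x --> +oo] --> +oo).

Definition classKL (zeta : R -> nat -> R) : Prop :=
  [/\ forall k, classK (fun r => zeta r k),
      forall r k, 0 <= r -> zeta r k.+1 <= zeta r k
    & forall r, 0 <= r -> zeta r k @[k --> \oo] --> 0].

Definition spectral_radius (n : nat) (A : 'M[R]_n) : R :=
  sup [set ComplexField.Normc.normc z | z in
        [set z : R[i] | eigenvalue (map_mx (fun x : R => (x%:C)%C) A) z]].

Definition dlt (V : zmodType) (f : nat -> V) (k : nat) : V := f k.+1 - f k.
Definition dlt2 (V : zmodType) (f : nat -> V) : nat -> V := dlt (dlt f).

Definition Abar (p : nat) : 'M[R]_(p + p) := block_mx 1%:M 1%:M 0 1%:M.
Definition Cbar (p : nat) : 'M[R]_(p, p + p) := row_mx 1%:M 0.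
Definition Fm (p : nat) : 'M[R]_(p, p + p) := row_mx 0 1%:M.
Definition Bbar (p m : nat) (P : 'M[R]_(p, m)) : 'M[R]_(p + p, m) := col_mx P 0.

Variables (p m : nat) (P : 'M[R]_(p, m)) (Yd : 'cV[R]_p).

Definition Yseq (U : nat -> 'cV[R]_m) (N : nat -> 'cV[R]_p) (k : nat) : 'cV[R]_p :=
  P *m U k + N k.
Definition Eseq (U : nat -> 'cV[R]_m) (N : nat -> 'cV[R]_p) (k : nat) : 'cV[R]_p :=
  Yd - Yseq U N k.
Definition Ubar (U : nat -> 'cV[R]_m) (k : nat) : 'cV[R]_m := - dlt U k.
Definition Dseq (N : nat -> 'cV[R]_p) (k : nat) : 'cV[R]_p := - dlt N k.
Definition Xbar (U : nat -> 'cV[R]_m) (N : nat -> 'cV[R]_p) (k : nat) : 'cV[R]_(p + p) :=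
  col_mx (Eseq U N k) (Dseq N k).

Definition is_eso (L : 'M[R]_(p + p, p)) (U : nat -> 'cV[R]_m)
    (N : nat -> 'cV[R]_p) (Xh : nat -> 'cV[R]_(p + p)) : Prop :=
  forall k, Xh k.+1 = Abar p *m Xh k + Bbar P *m Ubar U k
                      + L *m (Eseq U N k - Cbar p *m Xh k).

Definition Xtil (U : nat -> 'cV[R]_m) (N : nat -> 'cV[R]_p)
    (Xh : nat -> 'cV[R]_(p + p)) (k : nat) : 'cV[R]_(p + p) :=
  Xbar U N k - Xh k.

Variables (nu_p : 'cV[R]_p -> R) (nu_2p : 'cV[R]_(p + p) -> R).

Definition bounded_seq (N : nat -> 'cV[R]_p) : Prop :=
  exists M : R, forall k, nu_p (N k) <= M.

Definition beta_d2N (N : nat -> 'cV[R]_p) : R :=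
  sup (range (fun k => nu_p (dlt2 N k))).
Definition beta_ess_d2N (N : nat -> 'cV[R]_p) : R :=
  limn_sup (fun k => nu_p (dlt2 N k)).

Definition eso_error_bounded_superattractive (L : 'M[R]_(p + p, p)) : Prop :=
  exists (chi1 chi2 : R -> R) (zeta : R -> nat -> R),
    [/\ classKinf chi1, classKinf chi2, classKL zeta &
    forall (U : nat -> 'cV[R]_m) (N : nat -> 'cV[R]_p) (Xh : nat -> 'cV[R]_(p + p)),
      bounded_seq N -> is_eso L U N Xh ->
      (exists beta0 : R, 0 <= beta0 /\
         forall k, nu_2p (Xtil U N Xh k) <= chi1 (beta_d2N N) + zeta beta0 k)
      /\ (limn_esup (fun k => (nu_2p (Xtil U N Xh k))%:E)
            <= (chi2 (beta_ess_d2N N))%:E)%E].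

End ESO.

(* Main.v *)
Require Import Defs.
From HB Require Import structures.
From mathcomp Require Import all_boot all_order all_algebra.
From mathcomp Require Import all_classical all_reals all_analysis.
From mathcomp Require Import complex.
From mathcomp Require Import ring lra.
Import Order.TTheory GRing.Theory Num.Theory.
Import numFieldTopology.Exports numFieldNormedType.Exports.
Local Open Scope ring_scope.
Set Implicit Arguments. Unset Strict Implicit.
Section NormEq.
Variable R : realType.

Lemma vnorm0 (n : nat) (nu : 'cV[R]_n -> R) : is_vnorm nu -> nu 0 = 0.
Proof. by case=> _ _ hZ _; rewrite -(scale0r (0:'cV_n)) hZ normr0 mul0r. Qed.

Lemma vnormN n (nu : 'cV[R]_n -> R) x : is_vnorm nu -> nu (- x) = nu x.
Proof. by case=> _ _ hZ _; rewrite -scaleN1r hZ normrN normr1 mul1r. Qed.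

Lemma vnorm_sum n (nu : 'cV[R]_n -> R) (I : finType) (F : I -> 'cV_n) :
  is_vnorm nu -> nu (\sum_i F i) <= \sum_i nu (F i).
Proof.
move=> H; apply: (big_ind2 (fun x y => nu x <= y)); first by rewrite (vnorm0 H).
move=> x1 x2 y1 y2 h1 h2; case: H => _ _ _ hT.
exact: le_trans (hT _ _) (lerD h1 h2).
by [].
Qed.

Lemma entry_le_mxnorm m n (x : 'M[R]_(m, n)) i j : `|x i j| <= `|x|.
Proof.
rewrite [X in _ <= X]/Num.norm /= mx_normrE.
exact: (le_bigmax (0:R) (fun ij : 'I_m * 'I_n => `|x ij.1 ij.2|) (i, j)).
Qed.

Lemma vnorm_upper n (nu : 'cV[R]_n -> R) : is_vnorm nu ->
  exists K, 0 <= K /\ forall (x : 'cV[R]_n) b, (forall i, `|x i 0| <= b) -> nu x <= K * b.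
Proof.
move=> H; have [H0 _ hZ _] := H.
exists (\sum_i nu (delta_mx i (0 : 'I_1))); split.
  by apply: sumr_ge0 => i _.
move=> x b hb.
have -> : x = \sum_i x i 0 *: delta_mx i 0.
  rewrite {1}(matrix_sum_delta x); apply: eq_bigr => i _.
  by rewrite big_ord1.
apply: le_trans (vnorm_sum _ H) _.
rewrite mulr_suml; apply: ler_sum => i _.
by case: H => _ _ -> _; rewrite mulrC ler_wpM2l.
Qed.

Lemma vnorm_lip n (nu : 'cV[R]_n -> R) x y : is_vnorm nu -> `|nu x - nu y| <= nu (x - y).
Proof.
move=> H; have [_ _ _ hT] := H.
have h1 := hT (x - y) y; rewrite subrK in h1.
have h2 := hT x (y - x); rewrite addrC subrK -opprB (vnormN _ H) in h2.
rewrite ler_norml; apply/andP; split; lra.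
Qed.

Lemma vnorm_lower n (nu : 'cV[R]_n -> R) : is_vnorm nu ->
  exists c, 0 < c /\ forall (x : 'cV[R]_n) i, `|x i 0| <= c * nu x.
Proof.
move=> H; have [H0 H1 hZ hT] := H.
case: n nu H H0 H1 hZ hT => [|n] nu H H0 H1 hZ hT.
  by exists 1; split => // x [].
have [K [K0 HK]] := vnorm_upper H.
pose S := [set v : 'rV[R]_n.+1 | `|v| = 1]%classic.
pose f := fun v : 'rV[R]_n.+1 => nu v^T.
have fc : continuous (f : 'rV[R]_n.+1 -> R^o).
  move=> v; apply/(@cvgrPdist_lt _ R^o _ _ (nbhs_filter v)) => e e0.
  apply/nbhs_ballP; exists (e / (K + 1)).
    by rewrite /= divr_gt0 // ltr_wpDl.
  move=> w Hw; rewrite mx_norm_ball /ball_ /= in Hw.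
  apply: le_lt_trans (vnorm_lip _ _ H) _.
  rewrite -linearB /=.
  apply: le_lt_trans (HK _ `|v - w| _) _.
    by move=> i; rewrite mxE; apply: entry_le_mxnorm.
  apply: (@le_lt_trans _ _ (K * (e / (K + 1)))).
    by rewrite ler_wpM2l // ltW.
  rewrite mulrA ltr_pdivrMr ?ltr_wpDl // mulrC ltr_pM2l //.
  by rewrite ltrDl.
have S0 : (S !=set0)%classic.
  pose v := const_mx 1 : 'rV[R]_n.+1.
  have v0 : `|v| != 0.
    by rewrite normr_eq0; apply/eqP => /matrixP /(_ 0 0); rewrite !mxE; apply/eqP; exact: oner_neq0.
  exists (`|v|^-1 *: v); rewrite /S /= normrZ normfV normr_id mulVf //.
have Sc : compact S.
  apply: bounded_closed_compact.
    exists 1; split; first by rewrite realE ler01.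
    by move=> M M1 v /= ->; apply: ltW.
  apply: (@preimage_closed _ _ (@Num.norm _ 'rV[R]_n.+1) [set 1]%classic).
    by move=> x _; apply: norm_continuous.
  exact: closed_eq.
have fcS : {within S, continuous f}%classic by apply: continuous_subspaceT.
have [v0 v0S v0min] := compact_EVT_min S0 Sc fcS.
have fv0 : 0 < f v0.
  rewrite lt_def H0 andbT; apply/eqP => /H1 /eqP; rewrite trmx_eq0 => /eqP v00.
  by move: v0S; rewrite inE /S /= v00 normr0 => /esym/eqP; rewrite oner_eq0.
exists (f v0)^-1; split; first by rewrite invr_gt0.
move=> x i.
have [->|x0] := eqVneq x 0; first by rewrite mxE normr0 (vnorm0 H) mulr0.
have xT0 : `|x^T| != 0 by rewrite normr_eq0 trmx_eq0.
have : f v0 <= f (`|x^T|^-1 *: x^T).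
  apply: v0min; rewrite inE /S /= normrZ normfV normr_id mulVf //.
rewrite /f linearZ /= trmxK hZ normfV normr_id => hle.
rewrite ler_pdivlMl ?normr_gt0 // in hle.
rewrite ler_pdivlMl //; apply: le_trans hle; rewrite mulrC ler_wpM2r //.
  by have := entry_le_mxnorm x^T 0 i; rewrite mxE.
by rewrite trmx_eq0.
Qed.

End NormEq.
Section Spec.
Variable R : realType.
Local Notation C := (R[i]).
Local Notation cmx M := (map_mx (fun x : R => (x%:C)%C) M).

Lemma eig_roots n (M : 'M[R]_n) :
  exists rs : seq C, forall z, eigenvalue (cmx M) z = (z \in rs).
Proof.
have [rs Hrs] := closed_field_poly_normal (char_poly (cmx M)).
exists rs => z; rewrite eigenvalue_root_char Hrs (monicP (char_poly_monic _)) scale1r.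
by rewrite root_prod_XsubC.
Qed.

Lemma finite_bound (s : seq C) (f : C -> R) : exists b, 0 <= b /\
  (forall z, z \in s -> f z <= b) /\ ((forall z, z \in s -> f z < 1) -> b < 1).
Proof.
elim: s => [|a s [b [b0 [hb hb1]]]].
  by exists 0; split => //; split => // z; rewrite in_nil.
exists (Num.max (f a) b); split; first by rewrite le_max b0 orbT.
split.
  move=> z; rewrite in_cons => /orP[/eqP ->|zs]; first by rewrite le_max lexx.
  by rewrite le_max hb ?orbT.
move=> H; rewrite gt_max H ?mem_head // hb1 // => z zs.
by apply: H; rewrite in_cons zs orbT.
Qed.

Lemma rho_lt1 n (M : 'M[R]_n) :
  (forall z, eigenvalue (cmx M) z -> ComplexField.Normc.normc z < 1) ->
  spectral_radius M < 1.
Proof.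
move=> H; have [rs Hrs] := eig_roots M.
have [b [b0 [hb hb1]]] := finite_bound rs (@ComplexField.Normc.normc R).
apply: le_lt_trans (hb1 _); last by move=> z; rewrite -Hrs; exact: H.
rewrite /spectral_radius.
set E := (X in sup X).
have [ne|] := pselect (E !=set0)%classic.
  apply: ge_sup => // _ [z Ez <-]; apply: hb; rewrite -Hrs; exact: Ez.
move=> /set0P/negP; rewrite negbK => /eqP ->; rewrite sup0 //.
Qed.

Lemma rho_ub n (M : 'M[R]_n) z :
  eigenvalue (cmx M) z -> ComplexField.Normc.normc z <= spectral_radius M.
Proof.
move=> Hz; have [rs Hrs] := eig_roots M.
have [b [b0 [hb hb1]]] := finite_bound rs (@ComplexField.Normc.normc R).
apply: sup_upper_bound; last by exists z.
split; first by exists (ComplexField.Normc.normc z); exists z.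
exists b => _ [w Ew <-]; apply: hb; rewrite -Hrs; exact: Ew.
Qed.

Lemma normc_norm (z : C) : `|z| = (ComplexField.Normc.normc z)%:C%C.
Proof. by case: z. Qed.

Lemma partC p : exists L : 'M[R]_(p + p, p), spectral_radius (Abar R p - L *m Cbar R p) < 1.
Proof.
exists (col_mx (1%:M *+ 2) 1%:M).
set M := Abar R p - _.
have M2 : M *m M = 0.
  rewrite /M /Abar /Cbar mul_col_row !mulmx0 !mulmx1 opp_block_mx add_block_mx.
  rewrite mulmx_block.
  have e : 1%:M - 1%:M *+ 2 = - 1%:M :> 'M[R]_p by rewrite mulr2n opprD addrA subrr add0r.
  by rewrite e subr0 sub0r !(mulmxN, mulNmx, mulmx1, opprK, subrr, addNr) block_mx0.
apply: rho_lt1 => z /eigenvalueP [v Hv v0].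
have : v *m cmx M *m cmx M = (z ^+ 2) *: v.
  by rewrite Hv -scalemxAl Hv scalerA expr2.
rewrite -mulmxA -map_mxM M2 map_mx0 mulmx0 => /esym/eqP.
rewrite scaler_eq0 (negbTE v0) orbF expf_eq0 /= => /eqP ->.
by rewrite ComplexField.Normc.normc0.
Qed.

End Spec.
Section Decay.

Lemma rec_bound (F : numFieldType) (r mu Cb D : F) (a b : nat -> F) :
  0 <= mu -> `|a 0| <= D -> Cb + `|r| * D <= mu * D ->
  (forall k, `|b k| <= Cb * mu ^+ k) ->
  (forall k, a k.+1 = r * a k + b k) -> forall k, `|a k| <= D * mu ^+ k.
Proof.
move=> mu0 a0 hD hb ha; elim=> [|k IH]; first by rewrite expr0 mulr1.
rewrite ha; apply: le_trans (ler_normD _ _) _; rewrite normrM.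
have muk : 0 <= mu ^+ k by rewrite exprn_ge0.
apply: le_trans (lerD (ler_wpM2l (normr_ge0 r) IH) (hb k)) _.
rewrite mulrA -mulrDl exprS mulrA [D * mu]mulrC.
by rewrite ler_wpM2r // addrC.
Qed.

Lemma le_sum_term (F : numDomainType) (I : finType) (f : I -> F) i :
  (forall j, 0 <= f j) -> f i <= \sum_j f j.
Proof.
move=> h; rewrite (bigD1 i) //= lerDl; apply: sumr_ge0 => j _; exact: h.
Qed.

Lemma decay_gen (F : numFieldType) n (A : 'M[F]_n.+1) (mu : F) (t : seq F) :
  0 < mu -> (forall r, r \in t -> `|r| < mu) ->
  (exists D, forall k i j,
      `|(horner_mx A (\prod_(r <- t) ('X - r%:P)) *m A ^+ k) i j| <= D * mu ^+ k) ->
  exists D, forall k i j, `|(A ^+ k) i j| <= D * mu ^+ k.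
Proof.
elim: t => [|r t IH] mu0 ht [D HD].
  by exists D => k i j; have := HD k i j; rewrite big_nil rmorph1 mul1mx.
apply: IH => //; first by move=> x xt; apply: ht; rewrite in_cons xt orbT.
set Q := horner_mx A (\prod_(r <- t) ('X - r%:P)).
set Q' := horner_mx A _ in HD.
have HW k : Q *m A ^+ k.+1 = r *: (Q *m A ^+ k) + Q' *m A ^+ k.
  rewrite /Q' big_cons rmorphM rmorphB /= horner_mx_X horner_mx_C -/Q.
  have cAQ : A * Q = Q * A.
    by rewrite /Q -{1}(horner_mx_X A) -rmorphM mulrC rmorphM /= horner_mx_X.
  rewrite exprS !mulmxE mulrBl mulrA -cAQ.
  by rewrite mulrBl -[r%:M * Q]/(r%:M *m Q) mul_scalar_mx -scalerAl addrC subrK.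
have D0 : 0 <= D.
  by have := HD 0%N 0 0; rewrite expr0 mulr1; apply: le_trans (normr_ge0 _).
have rmu : 0 < mu - `|r| by rewrite subr_gt0 ht ?mem_head.
pose S := \sum_i \sum_j `|Q i j|.
have S0 : 0 <= S by apply: sumr_ge0 => i _; apply: sumr_ge0.
exists (S + D / (mu - `|r|)) => k i j.
apply: (@rec_bound _ r mu D _ (fun k => (Q *m A ^+ k) i j) (fun k => (Q' *m A ^+ k) i j)).
- exact: ltW.
- rewrite expr0 mulmx1 /S.
  have h1 : `|Q i j| <= \sum_j' `|Q i j'|.
    exact: (@le_sum_term F _ (fun j' => `|Q i j'|) j (fun j' => normr_ge0 _)).
  have h2 : \sum_j' `|Q i j'| <= S.
    exact: (@le_sum_term F _ (fun i' => \sum_j' `|Q i' j'|) i (fun i' => sumr_ge0 _ (fun j' _ => normr_ge0 _))).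
  apply: le_trans h1 (le_trans h2 _).
  by rewrite lerDl divr_ge0 // ltW.
- rewrite -lerBrDr -mulrBl mulrDr mulrCA mulfV ?gt_eqF // mulr1 lerDr.
  by rewrite mulr_ge0 // ltW.
- by move=> k'; apply: HD.
- by move=> k'; rewrite HW !mxE.
Qed.

Lemma decay_C (F : numClosedFieldType) n (A : 'M[F]_n.+1) (mu : F) :
  0 < mu -> (forall r, eigenvalue A r -> `|r| < mu) ->
  exists D, forall k i j, `|(A ^+ k) i j| <= D * mu ^+ k.
Proof.
move=> mu0 H.
have [rs Hrs] := closed_field_poly_normal (char_poly A).
rewrite (monicP (char_poly_monic _)) scale1r in Hrs.
apply: (@decay_gen _ _ A mu rs mu0).
  by move=> r rrs; apply: H; rewrite eigenvalue_root_char Hrs root_prod_XsubC.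
exists 0 => k i j; rewrite -Hrs Cayley_Hamilton mul0mx mxE normr0 mul0r //.
Qed.

End Decay.
Section DecayR.
Variable R : realType.
Local Notation C := (R[i]).
Local Notation cmx M := (map_mx (fun x : R => (x%:C)%C) M).

Lemma normC_real (x : R) : `|(x%:C)%C| = (`|x|%:C)%C.
Proof. by rewrite normc_norm /= expr0n addr0 sqrtr_sqr. Qed.

Lemma cmxX n (M : 'M[R]_n) k : cmx (M ^+ k) = (cmx M) ^+ k.
Proof.
elim: k => [|k IH]; first by rewrite !expr0 map_mx1.
by rewrite !exprS -!mulmxE map_mxM IH.
Qed.

Lemma decay_real n (M : 'M[R]_n) : spectral_radius M < 1 ->
  exists mu D, [/\ 0 < mu, mu < 1, 0 <= D &
    forall k i j, `|(M ^+ k) i j| <= D * mu ^+ k].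
Proof.
case: n M => [|n] M Hr.
  by exists (1/2), 0; split => // [|k []//]; lra.
set rho := spectral_radius M in Hr.
pose mu := (1 + Num.max rho 0) / 2.
have hm1 : rho <= Num.max rho 0 by rewrite le_max lexx.
have hm2 : 0 <= Num.max rho 0 by rewrite le_max lexx orbT.
have hm3 : Num.max rho 0 < 1 by rewrite gt_max Hr ltr01.
have mu0 : 0 < mu by rewrite /mu; lra.
have mu1 : mu < 1 by rewrite /mu; lra.
have [D HD] : exists D, forall k i j, `|(cmx M ^+ k) i j| <= D * (mu%:C)%C ^+ k.
  apply: decay_C; first by rewrite ltcR.
  move=> r Hr'; rewrite normc_norm ltcR; apply: le_lt_trans (rho_ub Hr') _.
  rewrite -/rho /mu; lra.
have D0 : 0 <= D.
  by have := HD 0%N 0 0; rewrite expr0 mulr1; apply: le_trans (normr_ge0 _).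
have /complex_realP [d Dd] : D \is Num.real by apply: ger0_real.
move: D0; rewrite Dd ler0c => d0.
exists mu, d; split => // k i j.
have := HD k i j; rewrite -cmxX mxE normC_real Dd -rmorphXn -rmorphM lecR //.
Qed.
End DecayR.
Section Cls.
Variable R : realType.

Lemma lin_classK (a : R) : 0 < a -> classK (fun r => a * r).
Proof.
move=> a0; split.
- by apply: continuous_subspaceT; apply: mulrl_continuous.
- by rewrite mulr0.
- by move=> x y _ xy; rewrite ltr_pM2l.
Qed.

Lemma lin_classKinf (a : R) : 0 < a -> classKinf (fun r => a * r).
Proof.
move=> a0; split; first exact: lin_classK.
apply/cvgryPge => A; near=> x.
rewrite -ler_pdivrMl //; near: x; apply: nbhs_pinfty_ge; exact: num_real.
Unshelve. all: by end_near.
Qed.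

Lemma exp_classKL (a mu : R) : 0 < a -> 0 < mu -> mu < 1 ->
  classKL (fun r k => a * r * mu ^+ k).
Proof.
move=> a0 mu0 mu1; split.
- move=> k; have -> : (fun r => a * r * mu ^+ k) = (fun r => (a * mu ^+ k) * r).
    by apply: funext => r; rewrite mulrAC.
  by apply: lin_classK; rewrite mulr_gt0 // exprn_gt0.
- move=> r k r0.
  have h : 0 <= a * r * mu ^+ k by rewrite !mulr_ge0 ?exprn_ge0 // ltW.
  by rewrite exprS (mulrC mu) mulrA ler_piMr // ltW.
- move=> r r0; rewrite -(mulr0 (a * r)); apply: cvgMl_tmp.
  by apply: cvg_expr; rewrite gtr0_norm.
Qed.

End Cls.
Section Sys.
Variable R : realType.

Lemma mulmx_entry_bound n (B : 'M[R]_n) (y : 'cV[R]_n) i (be ga : R) :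
  0 <= be -> 0 <= ga -> (forall l, `|B i l| <= be) -> (forall l, `|y l 0| <= ga) ->
  `|(B *m y) i 0| <= n%:R * be * ga.
Proof.
move=> b0 g0 hB hy; rewrite mxE; apply: le_trans (ler_norm_sum _ _ _) _.
apply: (@le_trans _ _ (\sum_(l < n) be * ga)).
  by apply: ler_sum => l _; rewrite normrM; apply: ler_pM.
by rewrite sumr_const card_ord -mulrA mulr_natl.
Qed.

Lemma unroll n (M : 'M[R]_n) (x w : nat -> 'cV[R]_n) :
  (forall k, x k.+1 = M *m x k + w k) ->
  forall k, x k = M ^+ k *m x 0%N + \sum_(j < k) M ^+ (k - j.+1) *m w j.
Proof.
move=> hx; have eM k : M *m M ^+ k = M ^+ k.+1 by rewrite exprS.
elim=> [|k IH]; first by rewrite expr0 mul1mx big_ord0 addr0.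
rewrite hx IH mulmxDr mulmxA eM big_ord_recr /= subnn expr0 mul1mx.
rewrite addrA; congr (_ + _ + _).
rewrite mulmx_sumr; apply: eq_bigr => j _.
by rewrite mulmxA eM subSS subnSK.
Qed.

Definition esum (mu : R) (gam : nat -> R) k := \sum_(j < k) mu ^+ (k - j.+1) * gam j.

Lemma esum0 mu gam : esum mu gam 0 = 0.
Proof. by rewrite /esum big_ord0. Qed.

Lemma esumS mu gam k : esum mu gam k.+1 = mu * esum mu gam k + gam k.
Proof.
rewrite /esum big_ord_recr /= subnn expr0 mul1r; congr (_ + _).
rewrite mulr_sumr; apply: eq_bigr => j _.
by rewrite mulrA -exprS subSS subnSK.
Qed.

Lemma esum_ge0 mu gam k : 0 <= mu -> (forall j, 0 <= gam j) -> 0 <= esum mu gam k.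
Proof.
move=> m0 g0; apply: sumr_ge0 => j _; apply: mulr_ge0 => //; exact: exprn_ge0.
Qed.

Lemma esum_ev mu gam J g : 0 <= mu -> mu < 1 -> 0 <= g ->
  (forall j, (J <= j)%N -> gam j <= g) ->
  forall t, esum mu gam (J + t) <= mu ^+ t * esum mu gam J + g / (1 - mu).
Proof.
move=> m0 m1 g0 hg; have m1' : 0 < 1 - mu by rewrite subr_gt0.
set q := g / (1 - mu).
have hq : q * (1 - mu) = g by rewrite /q mulfVK // gt_eqF.
have q0 : 0 <= q by rewrite /q divr_ge0 // ltW.
elim=> [|t IH]; first by rewrite addn0 expr0 mul1r lerDl.
rewrite addnS esumS.
have := hg (J + t)%N (leq_addr _ _).
have := ler_wpM2l m0 IH.
rewrite exprS.
set e := esum mu gam J; set a := esum mu gam (J + t); set mt := mu ^+ t.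
set gg := gam (J + t).
move=> h1 h2.
rewrite mulrDr mulrA in h1; rewrite mulrBr mulr1 in hq.
lra.
Qed.

Lemma sys_bound n (M : 'M[R]_n) (x w : nat -> 'cV[R]_n) (mu D G g0 : R) (gam : nat -> R) :
  0 <= mu -> 0 <= D -> n%:R * D <= G ->
  (forall k i j, `|(M ^+ k) i j| <= D * mu ^+ k) ->
  (forall k, x k.+1 = M *m x k + w k) ->
  (forall l, `|x 0%N l 0| <= g0) -> (forall j l, `|w j l 0| <= gam j) ->
  forall k i, `|x k i 0| <= G * mu ^+ k * g0 + G * esum mu gam k.
Proof.
move=> m0 D0 hG hM hx hx0 hw k i.
have g00 : 0 <= g0 by apply: le_trans (hx0 i).
have gam0 j : 0 <= gam j by apply: le_trans (hw j i).
have muk k' : 0 <= mu ^+ k' by apply: exprn_ge0.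
have G0 : 0 <= G by apply: le_trans hG; apply: mulr_ge0.
rewrite (unroll hx k) mxE; apply: le_trans (ler_normD _ _) _.
apply: lerD.
  have h := @mulmx_entry_bound n (M ^+ k) (x 0%N) i (D * mu ^+ k) g0
    (mulr_ge0 D0 (muk k)) g00 (fun l => hM k i l) hx0.
  apply: le_trans h _.
  by rewrite mulrA ler_wpM2r // ler_wpM2r.
rewrite summxE; apply: le_trans (ler_norm_sum _ _ _) _.
rewrite /esum mulr_sumr; apply: ler_sum => j _.
have h := @mulmx_entry_bound n (M ^+ (k - j.+1)) (w j) i (D * mu ^+ (k - j.+1)) (gam j)
    (mulr_ge0 D0 (muk _)) (gam0 j) (fun l => hM _ i l) (hw j).
apply: le_trans h _.
by rewrite mulrA mulrA ler_wpM2r // ler_wpM2r.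
Qed.

End Sys.
Section Lim.
Variable R : realType.

Lemma limsup_ev (u : nat -> R) (B : R) : (forall j, 0 <= u j <= B) ->
  forall e, 0 < e -> exists J, forall j, (J <= j)%N -> u j <= limn_sup u + e.
Proof.
move=> hu e e0.
have bu : bounded_fun u.
  exists B; split; first exact: num_real.
  move=> M BM x _ /=; have /andP[h1 h2] := hu x.
  by rewrite ger0_norm // (le_trans h2) // ltW.
rewrite limn_supE //.
have hi : has_inf (range (sups u)).
  split; first by exists (sups u 0%N), 0%N.
  exact: bounded_fun_has_lbound_sups.
have [_ [J _ <-] HJ] := inf_adherent e0 hi.
exists J => j Jj; apply: le_trans (ltW HJ).
rewrite /sups /=; apply: sup_upper_bound; last by exists j.
split; first by exists (u J), J => //=.
apply: has_ubound_sdrop; exists B => _ [k _ <-].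
by case/andP: (hu k).
Qed.

Lemma esup_le (v : nat -> R) (a : R) J : (forall k, (J <= k)%N -> v k <= a) ->
  (limn_esup (fun k => (v k)%:E) <= a%:E)%E.
Proof.
move=> hv; rewrite /limn_esup /limf_esup.
apply: (le_trans (ereal_inf_lbound _)).
  by exists [set k | (J <= k)%N]%classic; first by exists J.
apply: ge_ereal_sup => _ [k Jk <-]; rewrite lee_fin; exact: hv.
Qed.

End Lim.
Lemma partA (R : realType) (p m : nat) (P : 'M[R]_(p, m)) (Yd : 'cV[R]_p)
  (L : 'M[R]_(p + p, p)) (U : nat -> 'cV[R]_m) (N : nat -> 'cV[R]_p)
  (Xh : nat -> 'cV[R]_(p + p)) :
     is_eso P Yd L U N Xh ->
     forall k,
       Xh k.+1 = (Abar R p - L *m Cbar R p) *m Xh k + Bbar P *m Ubar U k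
                 + L *m Eseq P Yd U N k
       /\ Xtil P Yd U N Xh k.+1
            = (Abar R p - L *m Cbar R p) *m Xtil P Yd U N Xh k
              - (Fm R p)^T *m dlt2 N k.
Proof.
move=> H k; rewrite /Xtil H.
have HX : Xbar P Yd U N k.+1 = Abar R p *m Xbar P Yd U N k + Bbar P *m Ubar U k
     - (Fm R p)^T *m dlt2 N k.
  rewrite /Xbar /Abar /Bbar /Fm tr_row_mx trmx0 trmx1 mul_block_col !mul1mx !mul0mx
     add0r !mul_col_mx mul0mx mul1mx mul0mx opp_col_mx !add_col_mx oppr0 !addr0.
  congr col_mx.
    rewrite /Eseq /Yseq /Dseq /Ubar /dlt mulmxN mulmxBr.
    apply/matrixP=> i j; rewrite !mxE; ring.
  by apply/matrixP=> i j; rewrite /Dseq /dlt2 /dlt !mxE; ring.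
have HE : Eseq P Yd U N k = Cbar R p *m Xbar P Yd U N k.
  by rewrite /Cbar /Xbar mul_row_col mul1mx mul0mx addr0.
split.
  by rewrite mulmxBl mulmxBr -mulmxA; apply/matrixP=> i j; rewrite !mxE; ring.
rewrite HX HE !mulmxBr !mulmxBl !mulmxA.
by apply/matrixP=> i j; rewrite !mxE; ring.
Qed.
Section Fwd.
Variable R : realType.

Lemma Ft_entry p (v : 'cV[R]_p) l (g : R) : 0 <= g -> (forall i, `|v i 0| <= g) ->
  `|((Fm R p)^T *m v) l 0| <= g.
Proof.
move=> g0 hv; rewrite /Fm tr_row_mx trmx0 trmx1 mul_col_mx mul0mx mul1mx.
rewrite mxE; case: (fintype.split l) => j /=.
  by rewrite mxE normr0.
exact: hv.
Qed.

Lemma vnormB n (nu : 'cV[R]_n -> R) x y : is_vnorm nu -> nu (x - y) <= nu x + nu y.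
Proof. by move=> H; have [_ _ _ hT] := H; apply: le_trans (hT _ _) _; rewrite vnormN. Qed.

Lemma d2N_bound p (nu : 'cV[R]_p -> R) N Mb : is_vnorm nu ->
  (forall k, nu (N k) <= Mb) -> forall j, 0 <= nu (dlt2 N j) <= 4 * Mb.
Proof.
move=> H hN j; have [H0 _ _ _] := H; apply/andP; split => //.
rewrite /dlt2 /dlt; apply: le_trans (vnormB _ _ H) _.
apply: le_trans (lerD (vnormB _ _ H) (vnormB _ _ H)) _.
have := hN j; have := hN j.+1; have := hN j.+2; lra.
Qed.

Lemma forward p m (P : 'M[R]_(p, m)) Yd nu_p nu_2p (L : 'M[R]_(p + p, p)) :
  is_vnorm nu_p -> is_vnorm nu_2p ->
  spectral_radius (Abar R p - L *m Cbar R p) < 1 ->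
  eso_error_bounded_superattractive P Yd nu_p nu_2p L.
Proof.
move=> Hp H2 Hr.
set M := Abar R p - L *m Cbar R p.
have [mu [D [mu0 mu1 D0 HM]]] := decay_real Hr.
have [c [c0 Hc]] := vnorm_lower Hp.
have [K [K0 HK]] := vnorm_upper H2.
pose G := (p + p)%:R * D + 1.
have pD0 : 0 <= (p + p)%:R * D by rewrite mulr_ge0.
have G0 : 0 < G by rewrite /G; lra.
pose K1 := K + 1.
have K10 : 0 < K1 by rewrite /K1; lra.
have mu1' : 0 < 1 - mu by lra.
pose ka := K1 * G * c / (1 - mu).
have ka0 : 0 < ka by rewrite /ka divr_gt0 // !mulr_gt0.
exists (fun r => ka * r), (fun r => ka * r), (fun r k => K1 * G * r * mu ^+ k).
split.
- exact: lin_classKinf.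
- exact: lin_classKinf.
- by apply: exp_classKL => //; exact: mulr_gt0.
move=> U N Xh [Mb hMb] Heso.
pose x := Xtil P Yd U N Xh.
pose w := fun k => - ((Fm R p)^T *m dlt2 N k).
pose s := fun j => nu_p (dlt2 N j).
pose gam := fun j => c * s j.
have hs := d2N_bound Hp hMb.
have s0 j : 0 <= s j by case/andP: (hs j).
have gam0 j : 0 <= gam j by rewrite mulr_ge0 // ltW.
have hx k : x k.+1 = M *m x k + w k.
  by rewrite /x /w; have [_ ->] := partA Heso k.
have hw j l : `|w j l 0| <= gam j.
  rewrite /w mxE normrN; apply: Ft_entry => // i; exact: Hc.
pose g0 := \sum_l `|x 0%N l 0|.
have hx0 l : `|x 0%N l 0| <= g0.
  exact: (@le_sum_term R _ (fun l => `|x 0%N l 0|) l (fun l => normr_ge0 _)).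
have g00 : 0 <= g0 by apply: sumr_ge0.
have hG : (p + p)%:R * D <= G by rewrite /G lerDl.
have Hb := sys_bound (ltW mu0) D0 hG HM hx hx0 hw.
have Hnu k : nu_2p (x k) <= K1 * (G * mu ^+ k * g0 + G * esum mu gam k).
  have b0 : 0 <= G * mu ^+ k * g0 + G * esum mu gam k.
    by rewrite addr_ge0 // ?mulr_ge0 ?exprn_ge0 ?esum_ge0 // ltW.
  by apply: le_trans (HK _ _ (Hb k)) _; rewrite ler_wpM2r // /K1 lerDl.
split.
- exists g0; split => // k.
  set beta := beta_d2N nu_p N.
  have hsb j : s j <= beta.
    apply: sup_upper_bound; last by exists j.
    split; first by exists (s 0%N), 0%N.
    by exists (4 * Mb) => _ [j' _ <-]; case/andP: (hs j').
  have beta0 : 0 <= beta by apply: le_trans (s0 0%N) (hsb 0%N).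
  have he := @esum_ev _ mu gam 0%N (c * beta) (ltW mu0) mu1 (mulr_ge0 (ltW c0) beta0)
    (fun j _ => ler_wpM2l (ltW c0) (hsb j)) k.
  rewrite add0n esum0 mulr0 add0r in he.
  apply: le_trans (Hnu k) _.
  have f1 : K1 * (G * esum mu gam k) <= K1 * (G * (c * beta / (1 - mu))).
    by rewrite ler_wpM2l ?ler_wpM2l // ltW.
  have f2 : K1 * (G * (c * beta / (1 - mu))) = ka * beta by rewrite /ka; ring.
  rewrite mulrDr; lra.
- set b := beta_ess_d2N nu_p N.
  apply/lee_addgt0Pr => e e0.
  rewrite -EFinD.
  pose e1 := e / (2 * ka).
  have e10 : 0 < e1 by rewrite /e1 divr_gt0 // mulr_gt0.
  have [J HJ] := limsup_ev hs e10.
  have gJ : 0 <= b + e1 by apply: le_trans (s0 J) (HJ J (leqnn _)).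
  have he := @esum_ev _ mu gam J (c * (b + e1)) (ltW mu0) mu1 (mulr_ge0 (ltW c0) gJ)
    (fun j Jj => ler_wpM2l (ltW c0) (HJ j Jj)).
  pose A0 := K1 * G * (mu ^+ J * g0 + esum mu gam J).
  have A00 : 0 <= A0.
    by rewrite /A0 !mulr_ge0 ?addr_ge0 ?mulr_ge0 ?exprn_ge0 ?esum_ge0 // ltW.
  have ea0 : 0 < e / (2 * (A0 + 1)) by rewrite divr_gt0 // mulr_gt0 //; lra.
  have := cvg_expr (z := mu); rewrite gtr0_norm // => /(_ mu1).
  move/cvgr0Pnorm_lt => /(_ _ ea0) [T _ HT].
  apply: (@esup_le _ _ _ (J + T)%N) => k JTk.
  have Jk : (J <= k)%N by apply: leq_trans (leq_addr _ _) JTk.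
  have -> : k = (J + (k - J))%N by rewrite subnKC.
  set t := (k - J)%N.
  have tT : (T <= t)%N by rewrite /t leq_subRL.
  have h2 : mu ^+ t < e / (2 * (A0 + 1)).
    by have := HT t tT; rewrite /= ger0_norm // exprn_ge0 // ltW.
  apply: le_trans (Hnu _) _.
  have f1 : K1 * (G * esum mu gam (J + t)) <=
      K1 * (G * (mu ^+ t * esum mu gam J + c * (b + e1) / (1 - mu))).
    by rewrite ler_wpM2l ?ler_wpM2l ?he // ltW.
  have f2 : K1 * (G * (c * (b + e1) / (1 - mu))) = ka * b + e / 2.
    rewrite /e1 /ka; field; rewrite ?gt_eqF //.
  have f3 : mu ^+ t * A0 <= e / 2.
    apply: le_trans (ler_wpM2r A00 (ltW h2)) _.
    have A1 : 0 < A0 + 1 by lra.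
    have q : A0 / (A0 + 1) <= 1 by rewrite ler_pdivrMr //; lra.
    have -> : e / (2 * (A0 + 1)) * A0 = e / 2 * (A0 / (A0 + 1)).
      by field; rewrite gt_eqF.
    by rewrite ler_piMr // divr_ge0 // ltW.
  have f4 : K1 * (G * mu ^+ (J + t) * g0) + K1 * (G * (mu ^+ t * esum mu gam J))
     = mu ^+ t * A0 by rewrite /A0 exprD; ring.
  rewrite !mulrDr in f1 *; lra.
Qed.

End Fwd.
Section Conv.
Variable R : realType.
Local Notation C := (R[i]).
Local Notation cmx M := (map_mx (fun x : R => (x%:C)%C) M).

Lemma cmx_entryX n (M : 'M[R]_n) k i j : ((cmx M) ^+ k) i j = (((M ^+ k) i j)%:C)%C.
Proof. by have /matrixP/(_ i j) := cmxX M k; rewrite mxE => <-. Qed.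

Lemma converse p m (P : 'M[R]_(p, m)) Yd nu_p nu_2p (L : 'M[R]_(p + p, p)) :
  is_vnorm nu_p -> is_vnorm nu_2p ->
  eso_error_bounded_superattractive P Yd nu_p nu_2p L ->
  spectral_radius (Abar R p - L *m Cbar R p) < 1.
Proof.
move=> Hp H2 [chi1 [chi2 [zeta [[[_ ch10 _] _] _ [_ _ zlim] Hall]]]].
set M := Abar R p - L *m Cbar R p.
have [c [c0 Hc]] := vnorm_lower H2.
have key : forall x : 'cV[R]_(p + p), exists b0, 0 <= b0 /\
    forall k, nu_2p (M ^+ k *m x) <= zeta b0 k.
  move=> x.
  pose U := fun _ : nat => 0 : 'cV[R]_m.
  pose N := fun _ : nat => 0 : 'cV[R]_p.
  pose step := fun y => Abar R p *m y + Bbar P *m Ubar U 0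
     + L *m (Eseq P Yd U N 0 - Cbar R p *m y).
  pose Xh := fun k => iter k step (Xbar P Yd U N 0 - x).
  have Heso : is_eso P Yd L U N Xh by move=> k; rewrite /Xh iterS.
  have NB : bounded_seq nu_p N by exists 0 => k; rewrite (vnorm0 Hp).
  have [[b0 [b00 Hb]] _] := Hall U N Xh NB Heso.
  have Xt k : Xtil P Yd U N Xh k = M ^+ k *m x.
    elim: k => [|k IH].
      by rewrite expr0 mul1mx /Xtil /Xh /= opprB addrCA subrr addr0.
    have [_ ->] := partA Heso k.
    rewrite IH /dlt2 /dlt /N !subrr mulmx0 subr0 -/M.
    by rewrite exprS mulmxA.
  have beta0 : beta_d2N nu_p N = 0.
    have E : (fun k => nu_p (dlt2 N k)) = fun _ => 0.
      by apply: funext => k; rewrite /dlt2 /dlt /N !subrr (vnorm0 Hp).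
    rewrite /beta_d2N E; apply/eqP; rewrite eq_le; apply/andP; split.
      by apply: ge_sup; [exists 0, 0%N | move=> _ [k _ <-]].
    apply: sup_upper_bound; last by exists 0%N.
    by split; [exists 0, 0%N | exists 0 => _ [k _ <-]].
  exists b0; split => // k; have := Hb k; rewrite beta0 ch10 add0r Xt //.
apply: rho_lt1 => z /eigenvalueP [v Hv v0].
rewrite ltNge; apply/negP => hz.
have [i0 [l vl]] : exists i0 l, v i0 l != 0.
  by move/matrix0Pn: v0 => [i0 [l vl]]; exists i0, l.
pose x := delta_mx l (0 : 'I_1) : 'cV[R]_(p + p).
have [b0 [b00 Hb]] := key x.
have vk k : v *m (cmx M) ^+ k = z ^+ k *: v.
  elim: k => [|k IH]; first by rewrite expr0 mulmx1 scale1r.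
  have eS : (cmx M) ^+ k.+1 = (cmx M) ^+ k *m cmx M by rewrite exprSr.
  by rewrite eS mulmxA IH -scalemxAl Hv scalerA -exprSr.
have cx : cmx x = delta_mx l 0.
  by apply/matrixP => a b; rewrite !mxE rmorph_nat.
have key2 k : z ^+ k * v i0 l = \sum_i v i0 i * (((M ^+ k *m x) i 0)%:C)%C.
  have := congr1 (fun A : 'M[C]_(1, p + p) => A i0 l) (vk k) => /=.
  rewrite [X in _ = X -> _]mxE mxE => <-.
  apply: eq_bigr => i _; congr (_ * _).
  by rewrite cmx_entryX -colE mxE.
pose nc := @ComplexField.Normc.normc R.
have nc0 w : 0 <= nc w by have := normr_ge0 w; rewrite normc_norm ler0c.
have nv0 : 0 < nc (v i0 l).
  rewrite lt_def nc0 andbT; apply/eqP => /ComplexField.Normc.eq0_normc h.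
  by move: vl; rewrite h eqxx.
pose Sv := \sum_i nc (v i0 i).
have Sv0 : 0 <= Sv by apply: sumr_ge0.
have hbound k : nc (v i0 l) <= Sv * (c * zeta b0 k).
  have h1 : `|v i0 l| <= `|z ^+ k * v i0 l|.
    rewrite normrM normrX; apply: ler_peMl; first exact: normr_ge0.
    apply: exprn_ege1; rewrite normc_norm.
    have : (((1:R))%:C)%C <= ((nc z)%:C)%C by rewrite lecR.
    by [].
  rewrite key2 in h1.
  have h2 : `|\sum_i v i0 i * (((M ^+ k *m x) i 0)%:C)%C|
      <= \sum_i `|v i0 i| * (((c * zeta b0 k))%:C)%C.
    apply: le_trans (ler_norm_sum _ _ _) _; apply: ler_sum => i _.
    rewrite normrM normC_real; apply: ler_wpM2l => //; rewrite lecR.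
    by apply: le_trans (Hc _ i) _; rewrite ler_wpM2l //; exact: ltW.
  have h3 : \sum_i `|v i0 i| * (((c * zeta b0 k))%:C)%C = ((Sv * (c * zeta b0 k))%:C)%C.
    rewrite -mulr_suml /Sv [RHS]rmorphM [in RHS]rmorph_sum; congr (_ * _).
  by have := le_trans h1 h2; rewrite h3 normc_norm lecR.
pose eps := nc (v i0 l) / (c * (Sv + 1)).
have eps0 : 0 < eps by rewrite /eps divr_gt0 // mulr_gt0 //; lra.
have := zlim b0 b00; move/cvgr0Pnorm_lt => /(_ eps eps0) [T _ HT].
have hq := HT T (leqnn T); rewrite /= in hq.
have hb := hbound T.
set q := zeta b0 T in hq hb.
have f1 : Sv * (c * q) <= Sv * (c * `|q|).
  by rewrite ler_wpM2l // ler_wpM2l ?ler_norm // ltW.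
have f2 : Sv * (c * `|q|) <= Sv * (c * eps).
  by rewrite ler_wpM2l // ler_wpM2l // ltW.
have f3 : eps * (c * (Sv + 1)) = nc (v i0 l).
  by rewrite /eps mulfVK // gt_eqF // mulr_gt0 //; lra.
have f4 : 0 < c * eps by rewrite mulr_gt0.
rewrite !mulrDr !mulr1 in f3.
lra.
Qed.

End Conv.

Unset Implicit Arguments. Set Strict Implicit.

Theorem lemma3 (R : realType) (p m : nat) (P : 'M[R]_(p, m)) (Yd : 'cV[R]_p)
    (nu_p : 'cV[R]_p -> R) (nu_2p : 'cV[R]_(p + p) -> R) :
  is_vnorm nu_p -> is_vnorm nu_2p ->
  (* (a) *)
  (forall (L : 'M[R]_(p + p, p)) (U : nat -> 'cV[R]_m) (N : nat -> 'cV[R]_p)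
          (Xh : nat -> 'cV[R]_(p + p)),
     is_eso P Yd L U N Xh ->
     forall k,
       Xh k.+1 = (Abar R p - L *m Cbar R p) *m Xh k + Bbar P *m Ubar U k
                 + L *m Eseq P Yd U N k
       /\ Xtil P Yd U N Xh k.+1
            = (Abar R p - L *m Cbar R p) *m Xtil P Yd U N Xh k
              - (Fm R p)^T *m dlt2 N k)
  (* (b) *)
  /\ (forall L : 'M[R]_(p + p, p),
        eso_error_bounded_superattractive P Yd nu_p nu_2p L
        <-> spectral_radius (Abar R p - L *m Cbar R p) < 1)
  (* (c) *)
  /\ (exists L : 'M[R]_(p + p, p), spectral_radius (Abar R p - L *m Cbar R p) < 1).
Proof.
move=> Hp H2; split.
  by move=> L U N Xh; exact: partA.
split; last exact: partC.
move=> L; split; [exact: converse | exact: forward].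
Qed.
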